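(* Let $V$ be an $n$-dimensional vector space over a field $\mathbb{F}$ with an alternating bilinear form $\mathsf{s}$ of maximal rank, and let $\Gamma=\Gamma(V)$. For every hyperbolic basis $\{e_i,f_j\mid 1\le i\le r+d,\ 1\le j\le r\}$ of $V$ (where $2r=\mathrm{rank}(V)$, $d=\dim\mathrm{Rad}(V)$), setting $h_{2i-1}=e_i$ ($1\le i\le r+d$), $h_{2j}=f_j$ ($1\le j\le r$) and $C_l=\langle h_1,\dots,h_l\rangle$, the collection $\{C_l\}_{l=1}^{n-1}$ is a chamber of $\Gamma$. Conversely, every chamber of $\Gamma$ arises in this way from some (not necessarily unique) hyperbolic basis of $V$.
   Context: $U^\perp=\{v\in V:\mathsf{s}(u,v)=0\ \forall u\in U\}$, $\mathrm{Rad}(U)=U\cap U^\perp$, $\mathrm{rank}(U)=\dim U-\dim\mathrm{Rad}(U)$; maximal rank means $\dim\mathrm{Rad}(V)\le1$. A hyperbolic basis of $V$ is a basis $\{e_i,f_j\mid 1\le i\le r+d, 1\le j\le r\}$ with $\mathsf{s}(e_i,e_j)=\mathsf{s}(f_i,f_j)=0$ and $\mathsf{s}(e_i,f_j)=\delta_{ij}$ for $1\le i,j\le r$, and $\{e_{r+i}\}_{1\le i\le d}$ a basis of $\mathrm{Rad}(V)$. $\Gamma(V)$: for $i\in I=\{1,\dots,n-1\}$ the objects of type $i$ are the $i$-dimensional subspaces $U$ with $U\cap\mathrm{Rad}(V)=0$ and $\dim\mathrm{Rad}(U)\le1$; $X,Y$ are incident iff $X=Y$ or $X\subseteq Y$ with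 $X\cap\mathrm{Rad}(Y)=0$ or vice versa. A flag is a set of pairwise incident objects; a chamber is a flag containing one object of each type in $I$. *)

(* Defs.v *)
From HB Require Import structures.
From mathcomp Require Import all_boot all_order all_algebra.
Set Implicit Arguments. Unset Strict Implicit. Unset Printing Implicit Defensive.
Import GRing.Theory.
Local Open Scope ring_scope.
Local Open Scope vspace_scope.

Section SympGeom.
Variables (F : fieldType) (vT : vectType F) (s : vT -> vT -> F).

(* U^perp = { v | s(u,v) = 0 for all u in U }, realised as the intersection of
   the kernels of the linear forms s(b,-) for b ranging over a basis of U
   (this agrees with the pointwise definition when s is bilinear). *)
Definition sperp (U : {vspace vT}) : {vspace vT} :=
  (\bigcap_(u <- vbasis U) lker (linfun (s u : vT -> F^o)))%VS.

Definition srad (U : {vspace vT}) : {vspace vT} := (U :&: sperp U)%VS.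

Definition srank (U : {vspace vT}) : nat := (\dim U - \dim (srad U))%N.

Definition gobject (i : nat) (U : {vspace vT}) : bool :=
  [&& \dim U == i, U :&: srad fullv == 0%VS & \dim (srad U) <= 1]%N.

Definition gincident (X Y : {vspace vT}) : bool :=
  [|| X == Y, (X <= Y)%VS && (X :&: srad Y == 0%VS)
            | (Y <= X)%VS && (Y :&: srad X == 0%VS)].

Definition gchamber (C : nat -> {vspace vT}) : Prop :=
  (forall i, (0 < i < \dim (fullv : {vspace vT}))%N -> gobject i (C i)) /\
  (forall i j, (0 < i < \dim (fullv : {vspace vT}))%N ->
               (0 < j < \dim (fullv : {vspace vT}))%N -> gincident (C i) (C j)).

Definition rad_dim : nat := \dim (srad fullv).
Definition half_rank : nat := (srank fullv)./2.

(* hyperbolic basis {e_i, f_j | 1 <= i <= r+d, 1 <= j <= r} (1-based indices) *)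
Definition hyperbolic_basis (e f : nat -> vT) : Prop :=
  let r := half_rank in let d := rad_dim in
  basis_of fullv ([seq e i | i <- iota 1 (r + d)] ++ [seq f j | j <- iota 1 r]) /\
  (forall i j, (1 <= i <= r)%N -> (1 <= j <= r)%N ->
     [/\ s (e i) (e j) = 0%R, s (f i) (f j) = 0%R & s (e i) (f j) = ((i == j)%:R)%R]) /\
  basis_of (srad fullv) [seq e (r + i)%N | i <- iota 1 d].

End SympGeom.

(* h_{2i-1} = e_i, h_{2j} = f_j *)
Definition hyp_h (T : Type) (e f : nat -> T) (l : nat) : T :=
  if odd l then e (l.+1./2) else f (l./2).

Definition hyp_flag (F : fieldType) (vT : vectType F) (e f : nat -> vT) (l : nat)
  : {vspace vT} := (<< [seq hyp_h e f k | k <- iota 1 l] >>)%VS.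

(* Main.v *)
Require Import Defs.
From HB Require Import structures.
From mathcomp Require Import all_boot all_order all_algebra zify.
From Stdlib Require Import Classical.
Import GRing.Theory.
Local Open Scope ring_scope.

Lemma nat_parity (l : nat) : (exists k, l = k.*2) \/ (exists k, l = k.*2.+1).
Proof.
have := odd_double_half l; case: (odd l) => /= H; [right|left]; exists l./2; lia.
Qed.

Section Work.
Variables (F : fieldType) (vT : vectType F) (s : vT -> vT -> F).
Hypothesis s_linr : forall u, linear (s u : vT -> F^o).
Hypothesis s_linl : forall v, linear ((fun u => s u v) : vT -> F^o).
Hypothesis s_alt : forall x, s x x = 0.

Definition slinr (u : vT) : {linear vT -> F^o} :=
  HB.pack (s u : vT -> F^o) (GRing.isLinear.Build F vT F^o _ (s u : vT -> F^o) (s_linr u)).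
Definition slinl (v : vT) : {linear vT -> F^o} :=
  HB.pack ((fun u => s u v) : vT -> F^o)
    (GRing.isLinear.Build F vT F^o _ ((fun u => s u v) : vT -> F^o) (s_linl v)).

Lemma sDr u v w : s u (v + w) = s u v + s u w. Proof. exact: (raddfD (slinr u)). Qed.
Lemma sBr u v w : s u (v - w) = s u v - s u w. Proof. exact: (raddfB (slinr u)). Qed.
Lemma s0r u : s u 0 = 0. Proof. exact: (raddf0 (slinr u)). Qed.
Lemma sZr u a v : s u (a *: v) = a * s u v. Proof. by have := s_linr u a v 0; rewrite addr0 s0r addr0. Qed.
Lemma sDl u v w : s (v + w) u = s v u + s w u. Proof. exact: (raddfD (slinl u)). Qed.
Lemma sZl u a v : s (a *: v) u = a * s v u.
Proof. have := s_linl u a v 0; rewrite !addr0 => ->; have := raddf0 (slinl u); rewrite /= => ->; by rewrite addr0. Qed.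

Lemma skew u v : s v u = - s u v.
Proof.
have := s_alt (u + v); rewrite sDl !sDr !s_alt add0r addr0 => /eqP.
by rewrite addr_eq0 => /eqP ->; rewrite opprK.
Qed.

Lemma orth_span (X : seq vT) v : (forall x, x \in X -> s x v = 0) ->
  forall u, u \in <<X>>%VS -> s u v = 0.
Proof.
move=> H u uX.
have : (<<X>> <= lker (linfun (slinl v)))%VS.
  by apply/span_subvP => x xX; rewrite memv_ker lfunE /= H.
by move/subvP/(_ u uX); rewrite memv_ker lfunE /= => /eqP.
Qed.

Lemma orth_spanr (X : seq vT) v : (forall x, x \in X -> s v x = 0) ->
  forall u, u \in <<X>>%VS -> s v u = 0.
Proof.
move=> H u uX; rewrite skew (orth_span X v _ u uX) ?oppr0 // => x xX.
by rewrite skew H ?oppr0.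
Qed.

Lemma mem_bigcap_ker (X : seq vT) v :
  v \in (\bigcap_(u <- X) lker (linfun (s u : vT -> F^o)))%VS = all (fun u => s u v == 0) X.
Proof.
elim: X => [|x X IH]; first by rewrite big_nil memvf.
by rewrite big_cons memv_cap IH memv_ker (lfunE (slinr x)).
Qed.

Lemma mem_sperp (U : {vspace vT}) v : reflect (forall u, u \in U -> s u v = 0) (v \in sperp s U).
Proof.
rewrite /sperp mem_bigcap_ker; apply: (iffP allP) => H.
  move=> u; rewrite -(span_basis (vbasisP U)) => uU.
  by apply: (orth_span (vbasis U) v _ u uU) => x /H /eqP.
by move=> u /vbasis_mem /H ->.
Qed.

Lemma mem_srad (U : {vspace vT}) v : reflect (v \in U /\ forall u, u \in U -> s u v = 0) (v \in srad s U).
Proof.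
rewrite /srad memv_cap; apply: (iffP andP) => [[A /mem_sperp B]|[A B]]; split => //.
exact/mem_sperp.
Qed.


Definition Cs (h : nat -> vT) l : {vspace vT} := <<[seq h k | k <- iota 1 l]>>%VS.

Lemma CsS h l : Cs h l.+1 = (Cs h l + <[h l.+1]>)%VS.
Proof.
have E : iota 1 l.+1 = iota 1 l ++ [:: l.+1] by rewrite -[in LHS](addn1 l) iotaD add1n.
by rewrite /Cs E map_cat span_cat /= span_seq1.
Qed.

Lemma Cs0 h : Cs h 0 = 0%VS.
Proof. by rewrite /Cs span_nil. Qed.

Lemma Cs_mono h i j : (i <= j)%N -> (Cs h i <= Cs h j)%VS.
Proof.
move=> /subnK <-; elim: (j - i)%N => [|k IH]; first by rewrite add0n subvv.
by rewrite addSn CsS; apply: subv_trans IH (addvSl _ _).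
Qed.

Lemma Cs_mem h k l : (0 < k <= l)%N -> h k \in Cs h l.
Proof. move=> Hk; apply: memv_span; apply: map_f; rewrite mem_iota; lia. Qed.

Lemma Cs_ext h h' l : (forall k, (0 < k <= l)%N -> h k = h' k) -> Cs h l = Cs h' l.
Proof.
move=> H; rewrite /Cs; congr (<< _ >>%VS); apply/eq_in_map => k.
rewrite mem_iota => Hk; apply: H; lia.
Qed.

Lemma orth_Cs h l v : (forall k, (0 < k <= l)%N -> s (h k) v = 0) ->
  forall u, u \in Cs h l -> s u v = 0.
Proof.
move=> H u uC; apply: (orth_span _ v _ u uC) => x /mapP [k].
rewrite mem_iota => Hk ->; apply: H; lia.
Qed.

Lemma orth_Csr h l v : (forall k, (0 < k <= l)%N -> s v (h k) = 0) ->
  forall u, u \in Cs h l -> s v u = 0.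
Proof.
move=> H u uC; apply: (orth_spanr _ v _ u uC) => x /mapP [k].
rewrite mem_iota => Hk ->; apply: H; lia.
Qed.

Lemma dim_addline (U : {vspace vT}) v : v \notin U -> \dim (U + <[v]>) = (\dim U).+1.
Proof.
move=> vU.
have v0 : v != 0 by apply: contraNneq vU => ->; rewrite mem0v.
rewrite dimv_disjoint_sum ?dim_vline ?v0 ?addn1 //.
apply/eqP; rewrite -subv0; apply/subvP => w /memv_capP [wU /vlineP [k wk]].
rewrite memv0; have [k0|k0] := eqVneq k 0; first by rewrite wk k0 scale0r.
exfalso; move/negP: vU; apply; have -> : v = k^-1 *: w by rewrite wk scalerA mulVf ?scale1r.
exact: memvZ.
Qed.

Definition gram (h : nat -> vT) (N : nat) : Prop :=
  (forall a b, (0 < b)%N -> (b < a)%N -> (a <= N)%N -> ~~ (odd b && (a == b.+1)) ->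
     s (h b) (h a) = 0) /\
  (forall k, (k.*2.+2 <= N)%N -> s (h k.*2.+1) (h k.*2.+2) = 1).

Lemma gram0 h N a b : gram h N -> (0 < a <= N)%N -> (0 < b <= N)%N ->
  ~~ (odd b && (a == b.+1)) -> ~~ (odd a && (b == a.+1)) -> s (h b) (h a) = 0.
Proof.
move=> [G1 _] Ha Hb H1 H2; case: (ltngtP b a) => [ba|ab|->].
- by apply: G1 => //; lia.
- by rewrite skew G1 ?oppr0 //; lia.
- exact: s_alt.
Qed.

Lemma gram_le h N M : gram h N -> (M <= N)%N -> gram h M.
Proof.
move=> [G1 G2] MN; split; first by move=> a b *; apply: G1 => //; lia.
by move=> k Hk; apply: G2; lia.
Qed.

Lemma rad_even h N : gram h N -> forall k, (k.*2 <= N)%N -> forall v, v \in Cs h k.*2 ->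
  (forall u, u \in Cs h k.*2 -> s u v = 0) -> v = 0.
Proof.
move=> G; elim=> [|k IH] Hk v; first by rewrite Cs0 memv0 => /eqP.
rewrite doubleS !CsS.
case/memv_addP => y' Hy' [z2 /vlineP [b ->] ->].
case/memv_addP: Hy' => y yC [z1 /vlineP [a ->] ->] Hv.
have se_y : s (h k.*2.+1) y = 0.
  apply: (orth_Csr h k.*2 _ _ y yC) => j Hj; apply: (gram0 _ _ _ _ G) => //; lia.
have sf_y : s (h k.*2.+2) y = 0.
  apply: (orth_Csr h k.*2 _ _ y yC) => j Hj; apply: (gram0 _ _ _ _ G) => //; lia.
have sef : s (h k.*2.+1) (h k.*2.+2) = 1 by apply: G.2; rewrite -doubleS.
have sfe : s (h k.*2.+2) (h k.*2.+1) = -1 by rewrite skew sef.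
have memC j : (0 < j <= k.*2.+2)%N -> h j \in (Cs h k.*2 + <[h k.*2.+1]> + <[h k.*2.+2]>)%VS.
  by move=> Hj; rewrite -!CsS; apply: Cs_mem.
move: (Hv _ (memC k.*2.+1 ltac:(lia))).
rewrite !sDr !sZr se_y s_alt sef !mulr0 !add0r ?addr0 mulr1 => b0.
move: (Hv _ (memC k.*2.+2 ltac:(lia))).
rewrite !sDr !sZr sf_y s_alt sfe b0 !mulr0 !add0r ?addr0 mulrN1 => /eqP.
rewrite oppr_eq0 => /eqP a0.
rewrite a0 !scale0r !addr0; apply: IH => //; first by lia.
move=> u uC; have := Hv u; rewrite a0 b0 !scale0r !addr0; apply.
by rewrite -!CsS -doubleS; apply: subvP uC; apply: Cs_mono; lia.
Qed.

Lemma rad_odd h N : gram h N -> forall k, (k.*2.+1 <= N)%N -> forall v, v \in Cs h k.*2.+1 ->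
  (forall u, u \in Cs h k.*2.+1 -> s u v = 0) -> v \in <[h k.*2.+1]>%VS.
Proof.
move=> G k Hk v; rewrite CsS; case/memv_addP => y yC [z /vlineP [a ->] ->] Hv.
suff -> : y = 0 by rewrite add0r memvZ ?memv_line.
apply: (rad_even _ _ G k) => //; first by lia.
move=> u uC; have := Hv u; rewrite sDr sZr.
rewrite (orth_Cs h k.*2 (h k.*2.+1)) ?mulr0 ?addr0; first last.
- exact: uC.
- by move=> j Hj; apply: (gram0 _ _ _ _ G) => //; lia.
by apply; apply: subvP uC; apply: addvSl.
Qed.


Lemma notin_even h N k : gram h N -> (k.*2.+2 <= N)%N -> h k.*2.+2 \notin Cs h k.*2.+1.
Proof.
move=> G Hk; apply/negP => H.
have : s (h k.*2.+1) (h k.*2.+2) = 0.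
  by apply: (orth_Csr h k.*2.+1 _ _ _ H) => j Hj; apply: (gram0 _ _ _ _ G) => //; lia.
by rewrite G.2 // => /eqP; rewrite oner_eq0.
Qed.

Lemma notin_odd h N k : gram h N -> (k.*2.+2 <= N)%N -> h k.*2.+1 \notin Cs h k.*2.
Proof.
move=> G Hk; apply/negP => H.
have : s (h k.*2.+1) (h k.*2.+2) = 0.
  by apply: (orth_Cs h k.*2 _ _ _ H) => j Hj; apply: (gram0 _ _ _ _ G) => //; lia.
by rewrite G.2 // => /eqP; rewrite oner_eq0.
Qed.

Lemma dim_Cs h N : gram h N -> forall l, (l <= N)%N -> (l < N)%N || ~~ odd l ->
  \dim (Cs h l) = l.
Proof.
move=> G; elim=> [|l IH] Hl Hp; first by rewrite Cs0 dimv0.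
rewrite CsS dim_addline ?IH //; try lia.
case: (nat_parity l) => [[k El]|[k El]]; rewrite El.
- by apply: (notin_odd _ _ _ G); lia.
- by apply: (notin_even _ _ _ G); lia.
Qed.

Lemma proj h N : gram h N -> forall k, (k.*2 <= N)%N -> forall x,
  exists2 y, y \in Cs h k.*2 & forall b, (0 < b <= k.*2)%N -> s (h b) (x - y) = 0.
Proof.
move=> G; elim=> [|k IH] Hk x.
  by exists 0; [rewrite mem0v | move=> b Hb; exfalso; lia].
have [y yC Hy] := IH ltac:(lia) x.
set x' := x - y; set e := h k.*2.+1; set f := h k.*2.+2.
have sef : s e f = 1 by apply: G.2; rewrite -doubleS.
have sfe : s f e = -1 by rewrite skew sef.
exists (y + ((- s f x') *: e + s e x' *: f)).
  rewrite doubleS; apply: memvD; first by apply: subvP yC; apply: Cs_mono; lia.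
  by apply: memvD; apply: memvZ; apply: Cs_mem; lia.
move=> b Hb.
have -> : x - (y + ((- s f x') *: e + s e x' *: f)) = x' - ((- s f x') *: e + s e x' *: f).
  by rewrite /x' opprD addrA.
rewrite sBr (sDr (h b) (_ *: e)) !sZr.
case: (ltnP b k.*2.+1) => Hb'.
  rewrite /x' Hy; last by lia.
  rewrite /e /f !(gram0 _ _ _ _ G) ?mulr0 ?addr0 ?subrr //; lia.
have [->|->] : b = k.*2.+1 \/ b = k.*2.+2 by lia.
- by rewrite -/e s_alt sef mulr0 mulr1 add0r subrr.
- by rewrite -/f s_alt sfe mulr0 addr0 mulrN1 opprK subrr.
Qed.

Definition upd (h : nat -> vT) n v := fun j => if j == n then v else h j.

Lemma exists_notin (U W : {vspace vT}) : ~~ (W <= U)%VS -> exists2 x, x \in W & x \notin U.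
Proof.
move=> H; apply: NNPP => Hn; move/negP: H; apply; apply/subvP => x xW.
apply: NNPP => xU; apply: Hn; exists x => //; exact/negP.
Qed.

Lemma construct N (D : nat -> {vspace vT}) :
  D 0 = 0%VS -> (forall l, (l < N)%N -> (D l <= D l.+1)%VS) ->
  (forall l, (l <= N)%N -> \dim (D l) = l) ->
  (forall l, (l < N)%N -> odd l -> (D l :&: srad s (D l.+1) = 0)%VS) ->
  exists h, gram h N /\ forall l, (l <= N)%N -> D l = Cs h l.
Proof.
move=> D0 Dmono Ddim Drad.
have Dsub : forall i j, (i <= j <= N)%N -> (D i <= D j)%VS.
  move=> i j /andP [/subnK <-]; elim: (j - i)%N => [|d IHd] HN; first by rewrite add0n subvv.
  by apply: subv_trans (IHd ltac:(lia)) _; rewrite addSn; apply: Dmono; lia.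
suff: forall m, (m <= N)%N -> exists h, gram h m /\ forall l, (l <= m)%N -> D l = Cs h l.
  by apply.
elim=> [|m IH] Hm.
  exists (fun _ => 0); split; first by split => [a b *|k *]; exfalso; lia.
  by move=> l; rewrite leqn0 => /eqP ->; rewrite D0 Cs0.
have [h [G HD]] := IH ltac:(lia).
have Dm : D m = Cs h m := HD m (leqnn m).
suff [v /andP [vD vn] G'] : exists2 v, (v \in D m.+1) && (v \notin D m) & gram (upd h m.+1 v) m.+1.
  exists (upd h m.+1 v); split => // l.
  have Hext : forall l, (l <= m)%N -> Cs (upd h m.+1 v) l = Cs h l.
    move=> l' Hl'; apply: Cs_ext => j Hj; rewrite /upd ifN //; apply/eqP; lia.
  rewrite leq_eqVlt => /orP [/eqP ->|Hl]; last by rewrite Hext ?HD //; lia.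
  rewrite CsS Hext // -Dm /upd eqxx.
  apply/eqP; rewrite eq_sym eqEdim subv_add Dmono // -memvE vD /=.
  rewrite dim_addline // !Ddim ?leqnn //; lia.
case: (nat_parity m) => [[k Em]|[k Em]].
-
  have [x xD xn] : exists2 x, x \in D m.+1 & x \notin D m.
    apply: exists_notin; apply/negP => H; have := dimvS H; rewrite !Ddim //; lia.
  have [y yC Hy] := proj _ _ G k ltac:(lia) x.
  have yD : y \in D m.+1 by apply: subvP yC; rewrite -Em -Dm Dmono.
  exists (x - y).
    rewrite memvB //=; apply/negP => H; move/negP: xn; apply.
    by rewrite -(subrK y x) memvD // Dm Em.
  split.
    move=> a b Hb Hba Ha Hc; rewrite /upd.
    have [Ea|Ea] := eqVneq a m.+1.
      rewrite ifN; last by apply/eqP; lia.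
      by apply: Hy; lia.
    rewrite ifN; last by apply/eqP; lia.
    by apply: G.1 => //; lia.
  move=> k' Hk'; rewrite /upd !ifN; try (apply/eqP; lia).
  by apply: G.2; lia.
-
  set e := h m.
  have eC : e \notin Cs h k.*2.
    apply/negP => H; have : \dim (D m) = \dim (D k.*2).
      by rewrite Dm Em CsS -Em (addv_idPl _) -?memvE // HD //; lia.
    by rewrite !Ddim //; lia.
  have e0 : e != 0 by apply: contraNneq eC => ->; rewrite mem0v.
  have [z zD sz] : exists2 z, z \in D m.+1 & s e z != 0.
    apply: NNPP => Hn.
    have : e \in (D m :&: srad s (D m.+1))%VS.
      rewrite memv_cap; apply/andP; split; first by rewrite Dm; apply: Cs_mem; lia.
      apply/mem_srad; split.
        by move/subvP: (Dmono m ltac:(lia)); apply; rewrite Dm; apply: Cs_mem; lia.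
      move=> u uD; rewrite skew; apply/eqP; rewrite oppr_eq0; apply/negP => /negP H.
      by apply: Hn; exists u.
    rewrite Drad; [by rewrite memv0 (negPf e0) | lia | by rewrite Em /= odd_double].
  have [y yC Hy] := proj _ _ G k ltac:(lia) z.
  have sey : s e y = 0.
    apply: (orth_Csr h k.*2 _ _ _ yC) => j Hj; rewrite /e Em.
    by apply: (gram0 _ _ _ _ G) => //; lia.
  set c := s e (z - y).
  have cE : c = s e z by rewrite /c sBr sey subr0.
  have c0 : c != 0 by rewrite cE.
  have yD : y \in D m.+1.
    apply: subvP yC; rewrite -(HD k.*2) ?Dsub //; lia.
  exists (c^-1 *: (z - y)).
    rewrite memvZ ?memvB //=; apply/negP => H.
    have : s e (c^-1 *: (z - y)) = 0.
      rewrite Dm in H; apply: (orth_Csr h m _ _ _ H) => j Hj; rewrite /e Em.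
      by apply: (gram0 _ _ _ _ G) => //; lia.
    by rewrite sZr -/c mulVf // => /eqP; rewrite oner_eq0.
  split.
    move=> a b Hb Hba Ha Hc; rewrite /upd.
    have [Ea|Ea] := eqVneq a m.+1.
      rewrite ifN; last by apply/eqP; lia.
      by rewrite sZr Hy ?mulr0 //; lia.
    rewrite ifN; last by apply/eqP; lia.
    by apply: G.1 => //; lia.
  move=> k' Hk'; rewrite /upd.
  have [Ek|Ek] := eqVneq k' k.
    rewrite Ek -Em eqxx ifN; last by apply/eqP; lia.
    by rewrite -/e sZr -/c mulVf.
  rewrite !ifN; try (apply/eqP; lia).
  by apply: G.2; lia.
Qed.


Lemma capv_line0 (U : {vspace vT}) v : v \notin U -> (U :&: <[v]> = 0)%VS.
Proof.
move=> vU; apply/eqP; rewrite -subv0; apply/subvP => w /memv_capP [wU /vlineP [k wk]].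
rewrite memv0; have [k0|k0] := eqVneq k 0; first by rewrite wk k0 scale0r.
exfalso; move/negP: vU; apply; have -> : v = k^-1 *: w by rewrite wk scalerA mulVf ?scale1r.
exact: memvZ.
Qed.

Lemma rad_Cs_sub h N l : gram h N -> (l <= N)%N ->
  (srad s (Cs h l) <= if odd l then <[h l]> else 0)%VS.
Proof.
move=> G Hl; apply/subvP => v /mem_srad [vC Hv].
case: (nat_parity l) => [[k El]|[k El]]; rewrite El in vC Hv *.
- have -> : v = 0 by apply: (rad_even _ _ G k) => //; lia.
  by rewrite odd_double mem0v.
- by rewrite /= odd_double /=; apply: (rad_odd _ _ G k) => //; lia.
Qed.

Lemma dim_rad_Cs h N l : gram h N -> (l <= N)%N -> (\dim (srad s (Cs h l)) <= 1)%N.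
Proof.
move=> G Hl; apply: leq_trans (dimvS (rad_Cs_sub _ _ _ G Hl)) _.
by case: ifP => _; rewrite ?dimv0 // dim_vline; case: (_ != 0).
Qed.

Lemma forward (s_maxrank : (\dim (srad s fullv) <= 1)%N) e f :
  hyperbolic_basis s e f -> gchamber s (hyp_flag e f).
Proof.
rewrite /hyperbolic_basis /=; move=> [Hb [Hp Hr]].
have d1 : (rad_dim s <= 1)%N := s_maxrank.
move: Hb Hp Hr d1; set r := half_rank s; set d := rad_dim s => Hb Hp Hr d1.
have nE : \dim (fullv : {vspace vT}) = (r + d + r)%N.
  by case/andP: Hb => /eqP <- /eqP ->; rewrite size_cat !size_map !size_iota.
have erad : d = 1%N -> forall x, s x (e (r + 1)%N) = 0 /\ s (e (r + 1)%N) x = 0.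
  move=> d1' x.
  have : e (r + 1)%N \in srad s fullv.
    by rewrite -(span_basis Hr) d1'; apply: memv_span; rewrite /= mem_head.
  case/mem_srad => _ H; split; first by apply: H; rewrite memvf.
  by rewrite skew H ?oppr0 ?memvf.
have see i j : (0 < i <= r + d)%N -> (0 < j <= r + d)%N -> s (e i) (e j) = 0.
  move=> Hi Hj.
  have [Ei|Ei] := eqVneq i (r + 1)%N; first by rewrite Ei; apply: (erad _ _).2; lia.
  have [Ej|Ej] := eqVneq j (r + 1)%N; first by rewrite Ej; apply: (erad _ _).1; lia.
  by have [] := Hp i j ltac:(lia) ltac:(lia).
have sef i j : (0 < i <= r + d)%N -> (0 < j <= r)%N -> s (e i) (f j) = (i == j)%:R.
  move=> Hi Hj.
  have [Ei|Ei] := eqVneq i (r + 1)%N.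
    rewrite Ei (erad _ _).2; last by lia.
    by case: eqP => //; lia.
  by have [] := Hp i j ltac:(lia) ltac:(lia).
have sff i j : (0 < i <= r)%N -> (0 < j <= r)%N -> s (f i) (f j) = 0.
  by move=> Hi Hj; have [] := Hp i j Hi Hj.
set h := hyp_h e f.
have hodd j : h j.*2.+1 = e j.+1.
  by rewrite /h /hyp_h /= odd_double /= doubleK.
have heven j : h j.*2 = f j.
  by rewrite /h /hyp_h odd_double doubleK.
set n := \dim (fullv : {vspace vT}) in nE *.
have G : gram h n.
  split.
    move=> a b Hb0 Hba Ha Hc.
    case: (nat_parity a) => [[j Ea]|[j Ea]]; case: (nat_parity b) => [[i Eb]|[i Eb]];
      rewrite Ea Eb in Hb0 Hba Ha Hc *.
    - by rewrite !heven sff //; lia.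
    - rewrite hodd heven sef; try lia.
      by case: eqP => //; lia.
    - rewrite hodd heven skew sef; try lia.
      by case: eqP => [|_]; rewrite ?oppr0 //; lia.
    - by rewrite !hodd see //; lia.
  move=> k Hk; rewrite hodd -doubleS heven sef ?eqxx //; lia.
have hflag : hyp_flag e f = Cs h by [].
rewrite hflag.
have Hrad : forall l, (0 < l < n)%N -> (Cs h l :&: srad s fullv = 0)%VS.
  move=> l Hl.
  have [d0|d1'] : d = 0%N \/ d = 1%N by lia.
    move: Hr; rewrite d0 => /span_basis /= <-; rewrite span_nil.
    by apply/eqP; rewrite -subv0 capvSr.
  have En : n = r.*2.+1 by lia.
  have Er : srad s fullv = <[h n]>%VS.
    by rewrite En hodd -(span_basis Hr) d1' /= span_seq1 addn1.
  have hn0 : h n \notin Cs h r.*2.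
    apply/negP => H.
    have v0 : h n = 0.
      apply: (rad_even _ _ G r) => //; first by lia.
      move=> u _; rewrite En hodd -addn1; exact: (erad d1' u).1.
    have : \dim (srad s fullv) = 1%N by [].
    by rewrite Er v0 dim_vline eqxx.
  apply/eqP; rewrite -subv0 Er -(capv_line0 _ _ hn0); apply: capvS => //.
  by apply: Cs_mono; lia.
have inc i j : (0 < i)%N -> (i < j)%N -> (j < n)%N ->
    (Cs h i <= Cs h j)%VS && (Cs h i :&: srad s (Cs h j) == 0)%VS.
  move=> Hi Hij Hj; rewrite Cs_mono ?(ltnW Hij) //=.
  have := rad_Cs_sub _ _ _ G (ltnW Hj).
  rewrite -subv0; case: (nat_parity j) => [[k Ej]|[k Ej]]; rewrite Ej.
  - by rewrite odd_double => H; apply: subv_trans (capvSr _ _) H.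
  - rewrite /= odd_double /= => H.
    rewrite -(capv_line0 _ _ (notin_odd _ _ k G ltac:(lia))); apply: capvS => //.
    by apply: Cs_mono; lia.
split.
  move=> l Hl; rewrite /gobject; apply/and3P; split.
  - by rewrite (dim_Cs _ _ G l) //; lia.
  - by rewrite Hrad.
  - by apply: (dim_rad_Cs _ _ _ G); lia.
move=> i j Hi Hj; rewrite /gincident.
case: (ltngtP i j) => [ij|ji|->].
- by apply/or3P; apply: Or32; apply: inc => //; lia.
- by apply/or3P; apply: Or33; apply: inc => //; lia.
- by rewrite eqxx.
Qed.


Lemma converse (C : nat -> {vspace vT}) : gchamber s C ->
  exists e f : nat -> vT, hyperbolic_basis s e f /\
    forall l, (0 < l < \dim (fullv : {vspace vT}))%N -> C l = hyp_flag e f l.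
Proof.
move=> [Cobj Cinc].
set n := \dim (fullv : {vspace vT}) in Cobj Cinc *.
pose D l := if l == 0%N then 0%VS else if l == n then fullv else C l.
have Cdim l : (0 < l < n)%N -> \dim (C l) = l.
  by move=> Hl; case/and3P: (Cobj l Hl) => /eqP.
have Cinc2 l : (0 < l)%N -> (l.+1 < n)%N ->
    (C l <= C l.+1)%VS && (C l :&: srad s (C l.+1) == 0)%VS.
  move=> H1 H2; case/or3P: (Cinc l l.+1 ltac:(lia) ltac:(lia)).
  - move=> /eqP E; have := Cdim l ltac:(lia); rewrite E Cdim; lia.
  - by [].
  - case/andP=> /dimvS; rewrite !Cdim; lia.
have D0 : D 0%N = 0%VS by rewrite /D eqxx.
have Dmono l : (l < n)%N -> (D l <= D l.+1)%VS.
  move=> Hl; rewrite /D /=; case: eqP => [_|l0]; first by rewrite sub0v.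
  have -> : (l == n) = false by apply/eqP; lia.
  case: eqP => [_|ln']; first by rewrite subvf.
  by case/andP: (Cinc2 l ltac:(lia) ltac:(lia)).
have Ddim l : (l <= n)%N -> \dim (D l) = l.
  move=> Hl; rewrite /D; case: eqP => [->|l0]; first by rewrite dimv0.
  case: eqP => [->|ln]; first by [].
  by apply: Cdim; lia.
have Drad l : (l < n)%N -> odd l -> (D l :&: srad s (D l.+1) = 0)%VS.
  move=> Hl Ho; have l0 : l != 0%N by apply/eqP => E; rewrite E in Ho.
  rewrite /D (negPf l0) /=; case: eqP => [ln|_]; first by rewrite ln in Hl; lia.
  case: eqP => [ln|ln].
    by case/and3P: (Cobj l ltac:(lia)) => _ /eqP.
  by case/andP: (Cinc2 l ltac:(lia) ltac:(lia)) => _ /eqP.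
have [h [G HD]] := construct n D D0 Dmono Ddim Drad.
pose e i := h i.*2.-1; pose f j := h j.*2.
have hh k : hyp_h e f k = h k.
  case: (nat_parity k) => [[j ->]|[j ->]].
  - by rewrite /hyp_h odd_double doubleK.
  - by rewrite /hyp_h /= odd_double /= doubleK /e doubleS.
have hflag l : hyp_flag e f l = Cs h l.
  by change (hyp_flag e f l) with (Cs (hyp_h e f) l); apply: Cs_ext => k _; exact: hh.
have fullE : (fullv : {vspace vT}) = Cs h n.
  rewrite -HD // /D eqxx; case: ifP => // /eqP n0; apply/eqP.
  by rewrite -dimv_eq0 -/n n0.
have hnot l : (0 < l <= n)%N -> h l \notin Cs h l.-1.
  case: l => [|l] Hl //=; apply/negP => H.
  have : \dim (D l.+1) = \dim (D l).
    by rewrite !HD ?CsS ?(addv_idPl _) -?memvE //; lia.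
  by rewrite !Ddim //; lia.
have radV : srad s fullv = if odd n then <[h n]>%VS else 0%VS.
  apply/eqP; rewrite eqEsubv; apply/andP; split.
    by rewrite {1}fullE; apply: (rad_Cs_sub _ _ _ G).
  case: ifP => On; last by rewrite sub0v.
  rewrite -memvE; apply/mem_srad; split; first by rewrite memvf.
  rewrite fullE => u; apply: orth_Cs => j Hj.
  by apply: (gram0 _ _ _ _ G) => //; lia.
have hn0 : odd n -> h n != 0.
  move=> On; apply: contraNneq (hnot n _) => [->|]; first by rewrite mem0v.
  by rewrite leqnn andbT; case: (n) On.
have hd : rad_dim s = odd n.
  rewrite /rad_dim radV; case: ifP => On; last by rewrite dimv0.
  by rewrite dim_vline hn0.
have hr : half_rank s = n./2.
  rewrite /half_rank /srank; change (\dim (srad s fullv)) with (rad_dim s); rewrite hd -/n.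
  lia.
have nE : n = (n./2.*2 + odd n)%N by have := odd_double_half n; lia.
set m := n./2 in hr nE *.
exists e, f; split; last first.
  move=> l Hl; rewrite hflag -HD; last by lia.
  rewrite /D ifN; last by lia.
  by rewrite ifN //; apply/eqP; lia.
rewrite /hyperbolic_basis /= hr hd; split; last split.
- rewrite basisEdim size_cat !size_map !size_iota; apply/andP; split; last by rewrite -/n; lia.
  rewrite fullE; apply/span_subvP => x /mapP [k]; rewrite mem_iota => Hk ->.
  apply: memv_span; rewrite mem_cat; apply/orP.
  case: (nat_parity k) => [[j Ek]|[j Ek]].
  + right; rewrite Ek; apply/mapP; exists j => //; rewrite mem_iota; lia.
  + left; apply/mapP; exists j.+1; first by rewrite mem_iota; lia.
    by rewrite Ek /e doubleS.
- move=> i j Hi Hj.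
  case: i Hi => [|i] Hi; first by lia.
  case: j Hj => [|j] Hj; first by lia.
  rewrite /e /f !doubleS /=.
  split.
  + by apply: (gram0 _ _ _ _ G) => //; lia.
  + by apply: (gram0 _ _ _ _ G) => //; lia.
  + have [<-|ne] := eqVneq i j; first by rewrite eqxx G.2 //; lia.
    rewrite eqSS (negPf ne); apply: (gram0 _ _ _ _ G) => //; lia.
- rewrite radV; case On : (odd n) => /=.
    rewrite addn1 /e doubleS /= -(_ : n = m.*2.+1); last by rewrite On addn1 in nE.
    by rewrite basisEdim span_seq1 subvv dim_vline hn0.
  by rewrite basisEdim sub0v.
Qed.

End Work.

Theorem corollary3p1 (F : fieldType) (vT : vectType F) (s : vT -> vT -> F)
  (s_linr : forall u, linear (s u : vT -> F^o))
  (s_linl : forall v, linear ((fun u => s u v) : vT -> F^o))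
  (s_alt : forall x, s x x = 0)
  (s_maxrank : (\dim (srad s fullv) <= 1)%N) :
  (forall e f : nat -> vT, hyperbolic_basis s e f -> gchamber s (hyp_flag e f)) /\
  (forall C : nat -> {vspace vT}, gchamber s C ->
     exists e f : nat -> vT, hyperbolic_basis s e f /\
       forall l, (0 < l < \dim (fullv : {vspace vT}))%N -> C l = hyp_flag e f l).
Proof.
split.
  by move=> e f; apply: (@forward F vT s s_linr s_linl s_alt s_maxrank).
by move=> C; apply: (@converse F vT s s_linr s_linl s_alt).
Qed.
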